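(* Consider the coupled opinion–network system described in the context with logistic weight dynamics, and assume there is a constant $c\ge 1/2$ with $\phi(r)>c$ for all $r\in[-2,2]$. Then the population reaches consensus (there exists $x^*$ with $x_i(t)\to x^*$ for all $i$) and, for all $i,j$, $w_{ij}(t)\to \mathbb{1}\{w_{ij}(0)>0\}$ as $t\to\infty$.
   Context: There are $N$ individuals with opinions $x_i(t)\in[-1,1]$ and edge weights $w_{ij}(t)\in[0,1]$. The degree is $k_i=\sum_{j=1}^N w_{ij}$. With interaction function $\phi:[-2,2]\to[0,1]$, the system with logistic weight dynamics is $\frac{dx_i}{dt}=\frac{1}{k_i}\sum_{j\neq i} w_{ij}\,\phi(x_j-x_i)(x_j-x_i)$, $\frac{dw_{ij}}{dt}=w_{ij}(1-w_{ij})\big(2\phi(x_j-x_i)-1\big)$ for $i\neq j$, and $w_{ii}\equiv 1$. Standing assumptions: $\phi$ is Lipschitz continuous, even, and $\phi(0)>0$; $x_1(0)\le\dots\le x_N(0)$; $w_{ii}=1$; the initial network $w(0)$ is strongly connected (for all $i,j$ there is a sequence $i=i_0,\dots,i_m=j$ with $w_{i_n i_{n+1}}(0)>0$). *)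

(* Defs.v *)
From Stdlib Require Import Reals Lra List Relations.
From Coquelicot Require Import Coquelicot.
Open Scope R_scope.

Definition sumN (N : nat) (f : nat -> R) : R :=
  fold_right Rplus 0 (map f (seq 0 N)).

Definition degree (N : nat) (W : nat -> nat -> R) (i : nat) : R :=
  sumN N (fun j => W i j).

Definition opinion_rhs (N : nat) (phi : R -> R) (X : nat -> R)
    (W : nat -> nat -> R) (i : nat) : R :=
  / degree N W i *
  sumN N (fun j => if Nat.eqb j i then 0
                   else W i j * phi (X j - X i) * (X j - X i)).

Definition weight_rhs (phi : R -> R) (X : nat -> R) (W : nat -> nat -> R)
    (i j : nat) : R :=
  W i j * (1 - W i j) * (2 * phi (X j - X i) - 1).

Definition pos_edge (N : nat) (W : nat -> nat -> R) (i j : nat) : Prop :=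
  (i < N)%nat /\ (j < N)%nat /\ W i j > 0.

Definition strongly_connected (N : nat) (W : nat -> nat -> R) : Prop :=
  forall i j, (i < N)%nat -> (j < N)%nat ->
    clos_refl_trans nat (pos_edge N W) i j.

Definition lipschitz_on_22 (phi : R -> R) : Prop :=
  exists L : R, forall r s, -2 <= r <= 2 -> -2 <= s <= 2 ->
    Rabs (phi r - phi s) <= L * Rabs (r - s).

Definition ind_pos (a : R) : R := if Rlt_dec 0 a then 1 else 0.

(* Main.v *)
Require Import Defs.
From Stdlib Require Import Reals Lra Lia List Relations.
From Coquelicot Require Import Coquelicot.
Open Scope R_scope.


Definition sumL (l : list nat) (f : nat -> R) : R := fold_right Rplus 0 (map f l).

Lemma sumN_L N f : sumN N f = sumL (seq 0 N) f.
Proof. reflexivity. Qed.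

Lemma sumL_ext l f g : (forall k, In k l -> f k = g k) -> sumL l f = sumL l g.
Proof. induction l; simpl; intros H; auto. unfold sumL in *; simpl. rewrite H by auto. rewrite IHl; auto. Qed.

Lemma sumL_le l f g : (forall k, In k l -> f k <= g k) -> sumL l f <= sumL l g.
Proof. induction l; unfold sumL in *; simpl; intros H. lra.
  assert (f a <= g a) by auto. assert (fold_right Rplus 0 (map f l) <= fold_right Rplus 0 (map g l)) by auto. lra. Qed.

Lemma sumL_plus l f g : sumL l (fun k => f k + g k) = sumL l f + sumL l g.
Proof. induction l; unfold sumL in *; simpl. lra. rewrite IHl. lra. Qed.

Lemma sumL_scal l c f : sumL l (fun k => c * f k) = c * sumL l f.
Proof. induction l; unfold sumL in *; simpl. lra. rewrite IHl. lra. Qed.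

Lemma sumL_const l c : sumL l (fun _ => c) = INR (length l) * c.
Proof. induction l; unfold sumL in *; simpl. lra. rewrite IHl. destruct (length l); simpl; lra. Qed.

Lemma sumL_nonneg l f : (forall k, In k l -> 0 <= f k) -> 0 <= sumL l f.
Proof. intros H. apply Rle_trans with (sumL l (fun _ => 0)).
  rewrite sumL_const; lra. apply sumL_le; auto. Qed.

Lemma sumL_term l f k : (forall k, In k l -> 0 <= f k) -> In k l -> f k <= sumL l f.
Proof. induction l; unfold sumL in *; simpl; intros H Hk. contradiction.
  assert (0 <= f a) by auto.
  assert (0 <= fold_right Rplus 0 (map f l)) by (apply sumL_nonneg; auto).
  destruct Hk as [<-|Hk]. lra. assert (f k <= fold_right Rplus 0 (map f l)) by auto. lra. Qed.

Lemma sumL_derive l (f : R -> nat -> R) d t :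
  (forall k, In k l -> is_derive (fun s => f s k) t (d k)) ->
  is_derive (fun s => sumL l (f s)) t (sumL l d).
Proof. induction l; unfold sumL in *; simpl; intros H.
  apply (is_derive_const 0 t).
  apply (is_derive_plus (fun s => f s a) (fun s => fold_right Rplus 0 (map (f s) l))); auto. Qed.


Lemma nonincr_open (f f' : R -> R) a : (forall t, a < t -> is_derive f t (f' t)) ->
  (forall t, a < t -> f' t <= 0) -> forall s t, a < s <= t -> f t <= f s.
Proof. intros Hd Hn s t Hst.
  destruct (Req_dec s t) as [<-|Hne]. lra.
  destruct (MVT_gen f s t f') as [c [Hc Heq]].
  - intros y Hy. apply Hd. unfold Rmin in Hy. destruct (Rle_dec s t); lra.
  - intros y Hy. unfold Rmin in Hy. destruct (Rle_dec s t); [|lra].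
    apply continuity_pt_filterlim. apply (ex_derive_continuous (K:=R_AbsRing) (V:=R_NormedModule)). exists (f' y). apply Hd. lra.
  - unfold Rmin, Rmax in *. destruct (Rle_dec s t); [|lra].
    assert (f' c <= 0) by (apply Hn; lra). assert (f' c * (t - s) <= 0).
    { apply Rmult_le_0_r; lra. } lra.
Qed.

Lemma nonincr (f f' : R -> R) a : (forall t, a < t -> is_derive f t (f' t)) ->
  (forall t, a < t -> f' t <= 0) -> filterlim f (at_right a) (locally (f a)) ->
  forall s t, a <= s <= t -> f t <= f s.
Proof. intros Hd Hn Hc s t Hst.
  destruct (Req_dec a s) as [<-|Hne]; [|apply (nonincr_open f f' a); auto; lra].
  destruct (Req_dec a t) as [<-|Hne']. lra.
  destruct (Rle_dec (f t) (f a)) as [|Hgt]; auto. exfalso.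
  set (eps := f t - f a).
  assert (Heps : 0 < eps) by (unfold eps; lra).
  specialize (Hc (fun y => Rabs (y - f a) < eps)).
  destruct Hc as [d Hd'].
  { exists (mkposreal eps Heps). intros y Hy. apply Hy. }
  set (s := a + Rmin (d/2) ((t - a)/2)).
  assert (0 < Rmin (d/2) ((t-a)/2)) by (apply Rmin_pos; destruct d; simpl; lra).
  assert (Rmin (d/2) ((t-a)/2) <= d/2) by apply Rmin_l.
  assert (Rmin (d/2) ((t-a)/2) <= (t-a)/2) by apply Rmin_r.
  assert (Hs : Rabs (f s - f a) < eps).
  { apply Hd'. unfold ball; simpl; unfold AbsRing_ball, abs, minus, plus, opp; simpl.
    unfold s. rewrite Rabs_right; destruct d; simpl in *; lra. unfold s; lra. }
  assert (f t <= f s) by (apply (nonincr_open f f' a); auto; unfold s; lra).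
  apply Rabs_def2 in Hs. unfold eps in *; lra.
Qed.

Lemma right_cont_of_derive (f : R -> R) t d : is_derive f t d -> filterlim f (at_right t) (locally (f t)).
Proof. intros H. eapply filterlim_filter_le_1. apply filter_le_within.
  apply (ex_derive_continuous (K:=R_AbsRing) (V:=R_NormedModule)). exists d; auto. Qed.

Lemma deriv_eq (f : R -> R) t l l' : is_derive f t l -> l = l' -> is_derive f t l'.
Proof. intros H <-; auto. Qed.

Lemma der_exp_mul (f : R -> R) d k c t : is_derive f t d ->
  is_derive (fun s => f s * exp (k * (s - c))) t ((d + k * f t) * exp (k * (t - c))).
Proof. intros H.
  assert (He : is_derive (fun s => exp (k * (s - c))) t (k * exp (k * (t - c)))).
  { apply (is_derive_comp exp (fun s => k * (s - c))). apply is_derive_exp.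
    auto_derive; auto; ring. }
  pose proof (is_derive_mult f _ t d _ H He ltac:(intros; apply Rmult_comm)) as Hm.
  eapply deriv_eq. exact Hm. simpl. unfold plus, mult; simpl. ring.
Qed.

Definition pp (r : R) := Rmax r 0 * Rmax r 0.

Lemma pp_derive r : is_derive pp r (2 * Rmax r 0).
Proof.
  destruct (Rlt_dec 0 r) as [Hp|Hn].
  - rewrite Rmax_left by lra.
    apply (is_derive_ext_loc (fun y => y * y)).
    + exists (mkposreal r Hp). intros y Hy. unfold ball in Hy; simpl in Hy;
      unfold AbsRing_ball, abs, minus, plus, opp in Hy; simpl in Hy.
      apply Rabs_def2 in Hy. unfold pp. rewrite Rmax_left by lra. auto.
    + auto_derive; auto; ring.
  - destruct (Rlt_dec r 0) as [Hm|Hz].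
    + rewrite Rmax_right by lra.
      apply (is_derive_ext_loc (fun _ => 0)).
      * assert (Hp : 0 < - r) by lra. exists (mkposreal (-r) Hp). intros y Hy. unfold ball in Hy; simpl in Hy;
        unfold AbsRing_ball, abs, minus, plus, opp in Hy; simpl in Hy.
        apply Rabs_def2 in Hy. unfold pp. rewrite Rmax_right by lra. symmetry; apply Rmult_0_l.
      * eapply deriv_eq. apply (is_derive_const 0 r). simpl. unfold zero; simpl. ring.
    + assert (r = 0) by lra. subst r. rewrite Rmax_right by lra.
      apply is_derive_Reals. intros eps Heps. exists (mkposreal eps Heps).
      intros h Hh0 Hh. simpl in Hh. unfold pp. rewrite Rplus_0_l.
      rewrite (Rmax_right 0 0) by lra.
      replace ((Rmax h 0 * Rmax h 0 - 0 * 0) / h - 2 * 0) with (Rmax h 0 * (Rmax h 0 / h)) by (field; auto).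
      unfold Rmax. destruct (Rle_dec h 0).
      * rewrite Rmult_0_l, Rabs_R0. auto.
      * replace (h / h) with 1 by (field; auto). rewrite Rmult_1_r. rewrite Rabs_right in * by lra. lra.
Qed.

Lemma pp_nonneg r : 0 <= pp r.
Proof. unfold pp. apply Rle_0_sqr. Qed.


Lemma nondecr_closed (f f' : R -> R) a : (forall t, a <= t -> is_derive f t (f' t)) ->
  (forall t, a < t -> 0 <= f' t) -> forall s t, a <= s <= t -> f s <= f t.
Proof. intros Hd Hp s t Hst.
  assert (- f t <= - f s); [|lra].
  refine (nonincr (fun u => - f u) (fun u => - f' u) a _ _ _ s t Hst).
  - intros u Hu. eapply deriv_eq. apply (is_derive_opp (fun u => f u)). apply Hd; lra. reflexivity.
  - intros u Hu. specialize (Hp u Hu). lra.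
  - apply (right_cont_of_derive (fun u => - f u) a (- f' a)). eapply deriv_eq.
    apply (is_derive_opp (fun u => f u)). apply Hd; lra. reflexivity.
Qed.

Lemma in_seq0 N k : In k (seq 0 N) <-> (k < N)%nat.
Proof. rewrite in_seq. lia. Qed.

Inductive pathn (E : nat -> nat -> Prop) : nat -> nat -> nat -> Prop :=
| pn0 i : pathn E 0 i i
| pnS d i j k : E i j -> pathn E d j k -> pathn E (S d) i k.

Section Core.
Variable N : nat.
Variable x : R -> nat -> R.
Variable a : R -> nat -> nat -> R.
Definition dx t i := sumN N (fun k => a t i k * (x t k - x t i)).
Hypothesis Hsys : forall t i, 0 < t -> (i < N)%nat -> is_derive (fun s => x s i) t (dx t i).
Hypothesis Ha : forall t i k, 0 < t -> (i < N)%nat -> (k < N)%nat -> 0 <= a t i k.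
Hypothesis Hsum : forall t i, 0 < t -> (i < N)%nat -> sumN N (a t i) <= 1.

Lemma a_le1 t i k : 0 < t -> (i < N)%nat -> (k < N)%nat -> a t i k <= 1.
Proof. intros. eapply Rle_trans; [|apply (Hsum t i); auto].
  rewrite sumN_L. apply sumL_term. intros; apply Ha; auto; apply in_seq0; auto. apply in_seq0; auto. Qed.

Lemma key_ineq t M i : 0 < t -> (i < N)%nat ->
  dx t i * Rmax (x t i - M) 0 <=
  sumN N (fun k => (Rmax (x t i - M) 0 * Rmax (x t i - M) 0 + Rmax (x t k - M) 0 * Rmax (x t k - M) 0) / 2).
Proof. intros Ht Hi.
  set (p := fun k => Rmax (x t k - M) 0).
  change (dx t i * p i <= sumN N (fun k => (p i * p i + p k * p k) / 2)).
  assert (Hp : forall k, 0 <= p k) by (intros; unfold p; apply Rmax_r).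
  destruct (Rle_dec (x t i) M) as [Hle|Hgt].
  - assert (p i = 0) by (unfold p; apply Rmax_right; lra). rewrite H, Rmult_0_r.
    rewrite sumN_L; apply sumL_nonneg; intros. specialize (Hp k). nra.
  - assert (Hpi : p i = x t i - M) by (unfold p; apply Rmax_left; lra).
    assert (H1 : dx t i <= sumN N (fun k => a t i k * p k)).
    { unfold dx. rewrite !sumN_L. apply sumL_le. intros k Hk. apply in_seq0 in Hk.
      assert (x t k - M <= p k) by (unfold p; apply Rmax_l).
      apply Rmult_le_compat_l. apply Ha; auto. lra. }
    assert (H2 : sumN N (fun k => a t i k * p k) * p i <= sumN N (fun k => (p i * p i + p k * p k) / 2)).
    { rewrite Rmult_comm. rewrite !sumN_L. rewrite <- sumL_scal. apply sumL_le. intros k Hk. apply in_seq0 in Hk.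
      assert (0 <= a t i k <= 1) by (split; [apply Ha|apply a_le1]; auto).
      pose proof (Hp k). pose proof (Hp i).
      assert (p i * (a t i k * p k) <= p i * p k). { rewrite (Rmult_comm (a t i k)), <- Rmult_assoc. 
        replace (p i * p k) with (p i * p k * 1) at 2 by ring. apply Rmult_le_compat_l. nra. lra. }
      assert (0 <= (p i - p k) * (p i - p k)) by apply Rle_0_sqr. nra. }
    assert (0 < p i) by lra. nra.
Qed.

Lemma sum_double (p : nat -> R) :
  sumN N (fun i => sumN N (fun k => (p i * p i + p k * p k) / 2)) = INR N * sumN N (fun i => p i * p i).
Proof.
  rewrite !sumN_L.
  transitivity (sumL (seq 0 N) (fun i => INR N / 2 * (p i * p i) + 1/2 * sumL (seq 0 N) (fun k => p k * p k))).
  - apply sumL_ext. intros i _.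
    transitivity (sumL (seq 0 N) (fun k => (1/2*(p i*p i)) + 1/2 * (p k * p k))).
    apply sumL_ext; intros; field.
    rewrite sumL_plus, sumL_const, sumL_scal, length_seq. field.
  - rewrite sumL_plus, sumL_scal, sumL_const, length_seq. field.
Qed.

Lemma inv_upper t0 M : 0 < t0 -> (forall k, (k < N)%nat -> x t0 k <= M) ->
  forall t k, t0 <= t -> (k < N)%nat -> x t k <= M.
Proof. intros Ht0 HM.
  set (F := fun t => sumN N (fun i => pp (x t i - M))).
  set (dF := fun t => sumN N (fun i => dx t i * (2 * Rmax (x t i - M) 0))).
  assert (HdF : forall t, 0 < t -> is_derive F t (dF t)).
  { intros t Ht. unfold F, dF. rewrite !sumN_L.
    apply (sumL_derive _ (fun s i => pp (x s i - M))). intros k Hk. apply in_seq0 in Hk.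
    eapply deriv_eq. apply (is_derive_comp pp (fun s => x s k - M)). apply pp_derive.
    eapply deriv_eq. apply (is_derive_plus (fun s => x s k) (fun _ => - M)). apply Hsys; auto.
    apply is_derive_const. simpl. unfold plus, zero; simpl. reflexivity. simpl. unfold scal; simpl. unfold mult; simpl. ring. }
  assert (Hineq : forall t, 0 < t -> dF t <= 2 * INR N * F t).
  { intros t Ht. unfold dF, F.
    apply Rle_trans with (sumN N (fun i => 2 * sumN N (fun k => (Rmax (x t i - M) 0 * Rmax (x t i - M) 0 + Rmax (x t k - M) 0 * Rmax (x t k - M) 0) / 2))).
    - rewrite !sumN_L. apply sumL_le. intros i Hi. apply in_seq0 in Hi.
      pose proof (key_ineq t M i Ht Hi). lra.
    - rewrite !sumN_L, sumL_scal. rewrite <- !sumN_L. rewrite (sum_double (fun k => Rmax (x t k - M) 0)).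
      unfold pp. lra. }
  set (G := fun t => F t * exp (- (2 * INR N) * (t - t0))).
  assert (HG : forall s t, t0 <= s <= t -> G t <= G s).
  { apply (nonincr G (fun t => (dF t + - (2 * INR N) * F t) * exp (- (2 * INR N) * (t - t0))) t0).
    - intros t Ht. apply der_exp_mul. apply HdF. lra.
    - intros t Ht. pose proof (Hineq t ltac:(lra)). pose proof (exp_pos (- (2 * INR N) * (t - t0))).
      apply Rmult_le_0_r; lra.
    - apply (right_cont_of_derive _ _ ((dF t0 + - (2 * INR N) * F t0) * exp (- (2 * INR N) * (t0 - t0)))).
      apply der_exp_mul. apply HdF. lra. }
  assert (HF0 : F t0 = 0).
  { unfold F. rewrite sumN_L. transitivity (sumL (seq 0 N) (fun _ => 0)).
    apply sumL_ext. intros k Hk. apply in_seq0 in Hk. unfold pp. rewrite Rmax_right. ring. specialize (HM k Hk). lra.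
    rewrite sumL_const. ring. }
  intros t k Ht Hk.
  assert (HGt : G t <= 0). { specialize (HG t0 t ltac:(lra)). unfold G at 2 in HG. rewrite HF0 in HG. lra. }
  assert (HFt : F t <= 0).
  { unfold G in HGt. pose proof (exp_pos (- (2 * INR N) * (t - t0))).
    destruct (Rle_dec (F t) 0); auto. exfalso. assert (0 < F t * exp (- (2 * INR N) * (t - t0))) by (apply Rmult_lt_0_compat; lra). lra. }
  assert (pp (x t k - M) <= F t).
  { unfold F. rewrite sumN_L. apply (sumL_term _ (fun i => pp (x t i - M))). intros; apply pp_nonneg. apply in_seq0; auto. }
  unfold pp in H. destruct (Rle_dec (x t k) M) as [|Hgt]; auto.
  rewrite Rmax_left in H by lra. assert (0 < (x t k - M) * (x t k - M)) by (apply Rmult_lt_0_compat; lra). lra.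
Qed.


Variable E : nat -> nat -> Prop.
Variable al : R.
Hypothesis HE : forall t i j, 0 < t -> E i j -> (i < N)%nat /\ (j < N)%nat /\ al <= a t i j.
Hypothesis Hal : 0 < al <= 1.

Lemma dx_split t i M : dx t i = (M - x t i) * sumN N (a t i) - sumN N (fun k => a t i k * (M - x t k)).
Proof. unfold dx. rewrite !sumN_L.
  transitivity (sumL (seq 0 N) (fun k => (M - x t i) * a t i k + -1 * (a t i k * (M - x t k)))).
  apply sumL_ext; intros; ring. rewrite sumL_plus, !sumL_scal. ring. Qed.

Lemma push t0 M q : 0 < t0 -> (forall k, (k < N)%nat -> x t0 k <= M) -> (q < N)%nat ->
  forall d i, pathn E d i q -> forall t, t0 + INR d <= t ->
  al ^ d * (M - x t0 q) <= (M - x t i) * exp (1 * (t - t0)).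
Proof. intros Ht0 HM Hq.
  pose proof (inv_upper t0 M Ht0 HM) as Hinv.
  set (z := fun i s => (M - x s i) * exp (1 * (s - t0))).
  assert (Hzd : forall i s, (i < N)%nat -> 0 < s -> is_derive (z i) s ((- dx s i + 1 * (M - x s i)) * exp (1 * (s - t0)))).
  { intros i s Hi Hs. unfold z. apply (der_exp_mul (fun s => M - x s i)).
    eapply deriv_eq. apply (is_derive_plus (fun _ => M) (fun s => - x s i)). apply is_derive_const.
    apply (is_derive_opp (fun s => x s i)). apply Hsys; auto. simpl. unfold plus, opp, zero; simpl. ring. }
  assert (Hlow : forall i j s, (i < N)%nat -> (j < N)%nat -> t0 <= s ->
     a s i j * (M - x s j) <= - dx s i + 1 * (M - x s i) /\ 0 <= - dx s i + 1 * (M - x s i)).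
  { intros i j s Hi Hj Hs. rewrite (dx_split s i M).
    assert (H1 : a s i j * (M - x s j) <= sumN N (fun k => a s i k * (M - x s k))).
    { rewrite sumN_L. apply (sumL_term _ (fun k => a s i k * (M - x s k))).
      intros k Hk; apply in_seq0 in Hk. apply Rmult_le_pos. apply Ha; auto; lra. pose proof (Hinv s k Hs Hk); lra.
      apply in_seq0; auto. }
    assert (H2 : 0 <= a s i j * (M - x s j)).
    { apply Rmult_le_pos. apply Ha; auto; lra. pose proof (Hinv s j Hs Hj); lra. }
    pose proof (Hsum s i ltac:(lra) Hi). pose proof (Hinv s i Hs Hi).
    assert (0 <= (M - x s i) * (1 - sumN N (a s i))) by (apply Rmult_le_pos; lra). nra. }
  assert (Hzpos : forall i s, (i < N)%nat -> t0 <= s -> 0 <= z i s).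
  { intros i s Hi Hs. unfold z. apply Rmult_le_pos. pose proof (Hinv s i Hs Hi); lra. left; apply exp_pos. }
  assert (Hzinc : forall i s u, (i < N)%nat -> t0 <= s <= u -> z i s <= z i u).
  { intros i s u Hi Hsu. apply (nondecr_closed (z i) (fun s => (- dx s i + 1 * (M - x s i)) * exp (1 * (s - t0))) t0).
    intros; apply Hzd; auto; lra. intros v Hv. apply Rmult_le_pos. apply (Hlow i i v); auto; lra. left; apply exp_pos. auto. }
  assert (Hy0 : 0 <= M - x t0 q) by (pose proof (HM q Hq); lra).
  intros d i Hp. revert Hq Hy0. induction Hp; intros Hq Hy0 t Ht.
  - simpl. change ((M - x t i) * exp (1 * (t - t0))) with (z i t).
    apply Rle_trans with (z i t0). unfold z. replace (1 * (t0 - t0)) with 0 by ring. rewrite exp_0. lra.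
    apply Hzinc; auto. simpl in Ht; lra.
  - destruct (HE 1 i j ltac:(lra) H) as [Hi [Hj _]].
    specialize (IHHp Hq Hy0).
    set (c := al ^ S d * (M - x t0 k)).
    assert (Hc : 0 <= c) by (unfold c; apply Rmult_le_pos; auto; apply pow_le; lra).
    set (b := t0 + INR d).
    assert (Hb : 0 <= INR d) by apply pos_INR.
    assert (Hh : z i b - c * (b - b) <= z i t - c * (t - b)).
    { apply (nondecr_closed (fun s => z i s - c * (s - b))
         (fun s => (- dx s i + 1 * (M - x s i)) * exp (1 * (s - t0)) - c) b).
      - intros s Hs. eapply deriv_eq. apply (is_derive_plus (z i) (fun s => - (c * (s - b)))).
        apply Hzd; auto; unfold b in *; lra. auto_derive; auto. simpl. unfold plus; simpl. ring.
      - intros s Hs. destruct (HE s i j ltac:(unfold b in *; lra) H) as [_ [_ Hal']].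
        destruct (Hlow i j s Hi Hj ltac:(unfold b in *; lra)) as [Hl _].
        specialize (IHHp s ltac:(unfold b in *; lra)).
        pose proof (exp_pos (1 * (s - t0))).
        assert (0 <= M - x s j) by (pose proof (Hinv s j ltac:(unfold b in *; lra) Hj); lra).
        assert (al * (M - x s j) <= a s i j * (M - x s j)) by (apply Rmult_le_compat_r; lra).
        assert (al * (al ^ d * (M - x t0 k)) <= al * ((M - x s j) * exp (1 * (s - t0)))) by (apply Rmult_le_compat_l; lra).
        assert (al * (M - x s j) * exp (1 * (s - t0)) <= (- dx s i + 1 * (M - x s i)) * exp (1 * (s - t0)))
          by (apply Rmult_le_compat_r; lra).
        unfold c; simpl. nra.
      - rewrite S_INR in Ht. unfold b; lra. }
    assert (0 <= z i b) by (apply Hzpos; auto; unfold b; lra).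
    rewrite S_INR in Ht. fold b in Ht.
    change ((M - x t i) * exp (1 * (t - t0))) with (z i t).
    assert (c <= c * (t - b)). { replace c with (c * 1) at 1 by ring. apply Rmult_le_compat_l; unfold b in *; lra. }
    fold c. lra.
Qed.

End Core.


Lemma pow_le1 y n : 0 <= y <= 1 -> 0 <= y ^ n <= 1.
Proof. intros H; induction n; simpl. lra. nra. Qed.

Lemma pow_anti y d K : 0 <= y <= 1 -> (d <= K)%nat -> y ^ K <= y ^ d.
Proof. intros H Hd. replace K with (d + (K - d))%nat by lia. rewrite pow_add.
  pose proof (pow_le1 y d H). pose proof (pow_le1 y (K - d) H). nra. Qed.

Lemma neg_sys N x a t i : dx N (fun t i => - x t i) a t i = - dx N x a t i.
Proof. unfold dx. rewrite !sumN_L.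
  transitivity (-1 * sumL (seq 0 N) (fun k => a t i k * (x t k - x t i))); [|ring].
  rewrite <- sumL_scal. apply sumL_ext; intros; ring. Qed.

Section Step.
Variable N : nat.
Variable x : R -> nat -> R.
Variable a : R -> nat -> nat -> R.
Hypothesis Hsys : forall t i, 0 < t -> (i < N)%nat -> is_derive (fun s => x s i) t (dx N x a t i).
Hypothesis Ha : forall t i k, 0 < t -> (i < N)%nat -> (k < N)%nat -> 0 <= a t i k.
Hypothesis Hsum : forall t i, 0 < t -> (i < N)%nat -> sumN N (a t i) <= 1.
Variable E : nat -> nat -> Prop.
Variable al : R.
Hypothesis HE : forall t i j, 0 < t -> E i j -> (i < N)%nat /\ (j < N)%nat /\ al <= a t i j.
Hypothesis Hal : 0 < al <= 1.
Variable K : nat.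
Hypothesis HK : forall i q, (i < N)%nat -> (q < N)%nat -> exists d, (d <= K)%nat /\ pathn E d i q.
Hypothesis HN : (0 < N)%nat.

Definition beta := al ^ K * exp (- INR K).

Lemma beta_pos : 0 < beta.
Proof. unfold beta. apply Rmult_lt_0_compat. apply pow_lt; lra. apply exp_pos. Qed.

Lemma beta_le1 : beta <= 1.
Proof. unfold beta. pose proof (pow_le1 al K ltac:(lra)).
  assert (exp (- INR K) <= 1).
  { pose proof (exp_ineq1_le (INR K)). pose proof (pos_INR K).
    assert (exp (- INR K) * exp (INR K) = 1) by (rewrite <- exp_plus; replace (- INR K + INR K) with 0 by ring; apply exp_0).
    pose proof (exp_pos (- INR K)). nra. }
  pose proof (exp_pos (- INR K)). nra. Qed.

Lemma Hsysn : forall t i, 0 < t -> (i < N)%nat ->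
  is_derive (fun s => (fun t i => - x t i) s i) t (dx N (fun t i => - x t i) a t i).
Proof. intros t i Ht Hi. rewrite neg_sys. apply (is_derive_opp (fun s => x s i)). auto. Qed.

Lemma inv_both t0 m M : 0 < t0 -> (forall k, (k < N)%nat -> m <= x t0 k <= M) ->
  forall t k, t0 <= t -> (k < N)%nat -> m <= x t k <= M.
Proof. intros Ht0 H t k Ht Hk. split.
  - assert (- x t k <= - m); [|lra].
    apply (inv_upper N (fun t i => - x t i) a Hsysn Ha Hsum t0 (- m) Ht0); auto.
    intros j Hj; specialize (H j Hj); lra.
  - apply (inv_upper N x a Hsys Ha Hsum t0 M Ht0); auto. intros j Hj; apply H; auto.
Qed.

Lemma step t0 m M : 0 < t0 -> (forall k, (k < N)%nat -> m <= x t0 k <= M) ->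
  forall i, (i < N)%nat ->
  m + beta * (x t0 0%nat - m) <= x (t0 + INR K) i <= M - beta * (M - x t0 0%nat).
Proof. intros Ht0 H i Hi.
  destruct (HK i 0%nat Hi HN) as [d [Hd Hp]].
  assert (HdK : INR d <= INR K) by (apply le_INR; auto).
  assert (Hex : exp (1 * (t0 + INR K - t0)) * exp (- INR K) = 1).
  { rewrite <- exp_plus. replace (1 * (t0 + INR K - t0) + - INR K) with 0 by ring. apply exp_0. }
  pose proof (exp_pos (- INR K)). pose proof (exp_pos (1 * (t0 + INR K - t0))).
  pose proof (pow_anti al d K ltac:(lra) Hd).
  pose proof (pow_le1 al K ltac:(lra)).
  destruct (H 0%nat HN) as [H0a H0b].
  pose proof (inv_both t0 m M Ht0 H (t0 + INR K) i ltac:(pose proof (pos_INR K); lra) Hi) as [Hia Hib].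
  unfold beta. split.
  - pose proof (push N (fun t i => - x t i) a Hsysn Ha Hsum E al HE Hal t0 (- m) 0%nat Ht0
      ltac:(intros j Hj; specialize (H j Hj); lra) HN d i Hp (t0 + INR K) ltac:(lra)) as P.
    simpl in P.
    assert (al ^ K * (- m - - x t0 0%nat) <= al ^ d * (- m - - x t0 0%nat)) by (apply Rmult_le_compat_r; lra).
    assert (Q : al ^ K * (- m - - x t0 0%nat) * exp (- INR K) <= (- m - - x (t0 + INR K) i) * exp (1 * (t0 + INR K - t0)) * exp (- INR K))
      by (apply Rmult_le_compat_r; lra).
    assert (Q2 : (- m - - x (t0 + INR K) i) * exp (1 * (t0 + INR K - t0)) * exp (- INR K) = - m - - x (t0 + INR K) i)
      by (rewrite Rmult_assoc, Hex; ring).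
    lra.
  - pose proof (push N x a Hsys Ha Hsum E al HE Hal t0 M 0%nat Ht0
      ltac:(intros j Hj; specialize (H j Hj); lra) HN d i Hp (t0 + INR K) ltac:(lra)) as P.
    assert (al ^ K * (M - x t0 0%nat) <= al ^ d * (M - x t0 0%nat)) by (apply Rmult_le_compat_r; lra).
    assert (Q : al ^ K * (M - x t0 0%nat) * exp (- INR K) <= (M - x (t0 + INR K) i) * exp (1 * (t0 + INR K - t0)) * exp (- INR K))
      by (apply Rmult_le_compat_r; lra).
    assert (Q2 : (M - x (t0 + INR K) i) * exp (1 * (t0 + INR K - t0)) * exp (- INR K) = M - x (t0 + INR K) i)
      by (rewrite Rmult_assoc, Hex; ring).
    lra.
Qed.

End Step.

Lemma lim_of_eps (f : R -> R) l : (forall eps, 0 < eps -> exists T, forall t, T < t -> Rabs (f t - l) < eps) ->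
  is_lim f p_infty l.
Proof. intros H P [eps HP]. destruct (H eps (cond_pos eps)) as [T HT]. exists T. intros t Ht. apply HP.
  unfold ball; simpl; unfold AbsRing_ball, abs, minus, plus, opp; simpl. apply HT; auto. Qed.

Section Cons.
Variable N : nat.
Variable x : R -> nat -> R.
Variable a : R -> nat -> nat -> R.
Hypothesis Hsys : forall t i, 0 < t -> (i < N)%nat -> is_derive (fun s => x s i) t (dx N x a t i).
Hypothesis Ha : forall t i k, 0 < t -> (i < N)%nat -> (k < N)%nat -> 0 <= a t i k.
Hypothesis Hsum : forall t i, 0 < t -> (i < N)%nat -> sumN N (a t i) <= 1.
Variable E : nat -> nat -> Prop.
Variable al : R.
Hypothesis HE : forall t i j, 0 < t -> E i j -> (i < N)%nat /\ (j < N)%nat /\ al <= a t i j.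
Hypothesis Hal : 0 < al <= 1.
Variable K : nat.
Hypothesis HK : forall i q, (i < N)%nat -> (q < N)%nat -> exists d, (d <= K)%nat /\ pathn E d i q.
Hypothesis HN : (0 < N)%nat.
Hypothesis Hbnd : forall t k, 0 <= t -> (k < N)%nat -> -1 <= x t k <= 1.

Let be := beta al K.
Definition T n := 1 + INR (n * K).

Fixpoint bnd n : R * R := match n with
  | O => (-1, 1)
  | S n => (fst (bnd n) + be * (x (T n) 0%nat - fst (bnd n)), snd (bnd n) - be * (snd (bnd n) - x (T n) 0%nat))
  end.

Lemma T_pos n : 0 < T n.
Proof. unfold T. pose proof (pos_INR (n * K)). lra. Qed.

Lemma T_S n : T (S n) = T n + INR K.
Proof. unfold T. replace (S n * K)%nat with (n * K + K)%nat by lia. rewrite plus_INR. ring. Qed.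

Lemma bnd_inv n : (forall k, (k < N)%nat -> fst (bnd n) <= x (T n) k <= snd (bnd n)) /\
  snd (bnd n) - fst (bnd n) = 2 * (1 - be) ^ n.
Proof.
  pose proof (beta_pos al Hal K). pose proof (beta_le1 al Hal K). fold be in H, H0.
  induction n as [|n [IH1 IH2]].
  - simpl. split; [|ring]. intros k Hk. apply Hbnd; auto. unfold T; simpl; lra.
  - split.
    + intros k Hk. rewrite T_S. simpl.
      apply (step N x a Hsys Ha Hsum E al HE Hal K HK HN (T n) _ _ (T_pos n) IH1 k Hk).
    + simpl. transitivity ((1 - be) * (snd (bnd n) - fst (bnd n))). ring. rewrite IH2. ring.
Qed.

Lemma bnd_mono n : fst (bnd n) <= fst (bnd (S n)) /\ snd (bnd (S n)) <= snd (bnd n).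
Proof.
  pose proof (beta_pos al Hal K). fold be in H.
  destruct (bnd_inv n) as [I _]. destruct (I 0%nat HN). simpl. split; nra.
Qed.

Lemma bnd_mono_p n p : fst (bnd n) <= fst (bnd (n + p)) /\ snd (bnd (n + p)) <= snd (bnd n).
Proof. induction p. rewrite Nat.add_0_r; lra.
  replace (n + S p)%nat with (S (n + p)) by lia. pose proof (bnd_mono (n + p)). lra. Qed.

Lemma bnd_cross n j : fst (bnd n) <= snd (bnd j).
Proof. destruct (bnd_mono_p n j) as [A _]. destruct (bnd_mono_p j n) as [_ B].
  rewrite Nat.add_comm in B. destruct (bnd_inv (n + j)) as [I _]. destruct (I 0%nat HN). lra. Qed.

Lemma consensus : exists xs : R, forall i, (i < N)%nat -> is_lim (fun t => x t i) p_infty xs.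
Proof.
  destruct (completeness (fun r => exists n, r = fst (bnd n))) as [xs [Hub Hlub]].
  { exists 1. intros r [n ->]. apply (bnd_cross n 0). }
  { exists (-1). exists 0%nat. reflexivity. }
  assert (Hlo : forall n, fst (bnd n) <= xs) by (intros n; apply Hub; exists n; auto).
  assert (Hhi : forall n, xs <= snd (bnd n)) by (intros n; apply Hlub; intros r [j ->]; apply bnd_cross).
  exists xs. intros i Hi. apply lim_of_eps. intros eps Heps.
  pose proof (beta_pos al Hal K). pose proof (beta_le1 al Hal K). fold be in H, H0.
  destruct (pow_lt_1_zero (1 - be) ltac:(rewrite Rabs_right; lra) (eps / 2) ltac:(lra)) as [n Hn].
  specialize (Hn n (le_n n)). rewrite Rabs_pos_eq in Hn by (apply pow_le; lra).
  exists (T n). intros t Ht.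
  destruct (bnd_inv n) as [I W].
  assert (Hx : fst (bnd n) <= x t i <= snd (bnd n)).
  { apply (inv_both N x a Hsys Ha Hsum (T n) _ _ (T_pos n) I t i); auto; lra. }
  specialize (Hlo n); specialize (Hhi n). apply Rabs_def1; lra.
Qed.

End Cons.


Lemma rc_mul (f g : R -> R) a : filterlim f (at_right a) (locally (f a)) ->
  filterlim g (at_right a) (locally (g a)) ->
  filterlim (fun s => f s * g s) (at_right a) (locally (f a * g a)).
Proof. intros Hf Hg. eapply (filterlim_comp_2 f g Rmult). exact Hf. exact Hg. apply (filterlim_mult (K:=R_AbsRing)). Qed.

Lemma rc_bound (f g : R -> R) a : filterlim f (at_right a) (locally (f a)) ->
  (forall s, Rabs (g s - g a) <= Rabs (f s - f a)) -> filterlim g (at_right a) (locally (g a)).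
Proof. intros Hf Hb P [eps HP].
  assert (H := Hf (fun y => Rabs (y - f a) < eps)).
  simpl in H. unfold filtermap in *. 
  eapply filter_imp; [|apply H].
  - intros s Hs. apply HP. unfold ball; simpl; unfold AbsRing_ball, abs, minus, plus, opp; simpl.
    eapply Rle_lt_trans. apply Hb. exact Hs.
  - exists eps. intros y Hy. exact Hy.
Qed.

Lemma rc_exp k c a : filterlim (fun s => exp (k * (s - c))) (at_right a) (locally (exp (k * (a - c)))).
Proof. apply (right_cont_of_derive (fun s => exp (k * (s - c))) a (k * exp (k * (a - c)))).
  apply (is_derive_comp exp (fun s => k * (s - c))). apply is_derive_exp.
  auto_derive; auto; ring. Qed.

Lemma fin_bound N (P : nat -> nat -> Prop) :
  (forall i K K', (K <= K')%nat -> P i K -> P i K') ->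
  (forall i, (i < N)%nat -> exists K, P i K) -> exists K, forall i, (i < N)%nat -> P i K.
Proof. intros Hm H. induction N.
  - exists 0%nat. intros; lia.
  - destruct IHN as [K1 H1]. intros; apply H; lia.
    destruct (H N ltac:(lia)) as [K2 H2]. exists (Nat.max K1 K2). intros i Hi.
    destruct (Nat.eq_dec i N) as [->|Hne].
    + apply (Hm N K2); auto; lia.
    + apply (Hm i K1); [lia|]. apply H1; lia.
Qed.

Lemma fin_min N (P : nat -> R -> Prop) :
  (forall i al al', 0 < al' <= al -> P i al -> P i al') ->
  (forall i, (i < N)%nat -> exists al, 0 < al /\ P i al) -> exists al, 0 < al /\ forall i, (i < N)%nat -> P i al.
Proof. intros Hm H. induction N.
  - exists 1. split. lra. intros; lia.
  - destruct IHN as [a1 [Ha1 H1]]. intros; apply H; lia.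
    destruct (H N ltac:(lia)) as [a2 [Ha2 H2]]. exists (Rmin a1 a2). split. apply Rmin_pos; auto.
    pose proof (Rmin_l a1 a2). pose proof (Rmin_r a1 a2). pose proof (Rmin_pos a1 a2 Ha1 Ha2).
    intros i Hi.
    destruct (Nat.eq_dec i N) as [->|Hne].
    + apply (Hm N a2); auto; lra.
    + apply (Hm i a1); [lra|]. apply H1; lia.
Qed.

Lemma phi_min (phi : R -> R) c :
  lipschitz_on_22 phi -> c >= 1/2 -> (forall r, -2 <= r <= 2 -> phi r > c) ->
  exists mp, 0 < mp /\ forall r, -2 <= r <= 2 -> mp <= 2 * phi r - 1.
Proof. intros [L HL] Hc Hphi.
  set (cl := fun r => Rmax (-2) (Rmin r 2)).
  assert (Hcl : forall r, -2 <= cl r <= 2).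
  { intros r; unfold cl, Rmax, Rmin. repeat match goal with |- context [Rle_dec ?a ?b] => destruct (Rle_dec a b)
      | H : context [Rle_dec ?a ?b] |- _ => destruct (Rle_dec a b) end;
    repeat match goal with H : ~ _ <= _ |- _ => apply Rnot_le_lt in H end; lra. }
  assert (Hcl2 : forall r s, Rabs (cl r - cl s) <= Rabs (r - s)).
  { intros r s; unfold cl, Rmax, Rmin.
    repeat match goal with |- context [Rle_dec ?a ?b] => destruct (Rle_dec a b)
      | H : context [Rle_dec ?a ?b] |- _ => destruct (Rle_dec a b) end;
    repeat match goal with H : ~ _ <= _ |- _ => apply Rnot_le_lt in H end;
    unfold Rabs; repeat destruct Rcase_abs; lra. }
  assert (Hcl3 : forall r, -2 <= r <= 2 -> cl r = r).
  { intros r Hr; unfold cl, Rmax, Rmin. repeat match goal with |- context [Rle_dec ?a ?b] => destruct (Rle_dec a b)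
      | H : context [Rle_dec ?a ?b] |- _ => destruct (Rle_dec a b) end;
    repeat match goal with H : ~ _ <= _ |- _ => apply Rnot_le_lt in H end; lra. }
  set (psi := fun r => phi (cl r)).
  assert (Hcont : forall r, continuity_pt psi r).
  { intros r eps Heps. exists (eps / (Rabs L + 1)). split.
    apply Rdiv_lt_0_compat; auto. pose proof (Rabs_pos L); lra.
    intros s [_ Hs]. simpl in *. unfold R_dist in *. unfold psi.
    pose proof (HL (cl s) (cl r) (Hcl s) (Hcl r)) as H1. pose proof (Hcl2 s r).
    pose proof (Rabs_pos L). pose proof (Rabs_pos (cl s - cl r)). pose proof (Rle_abs L).
    assert (L * Rabs (cl s - cl r) <= Rabs L * Rabs (s - r)) by nra.
    assert (Rabs L * Rabs (s - r) < eps).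
    { apply Rle_lt_trans with ((Rabs L + 1) * Rabs (s - r)). pose proof (Rabs_pos (s - r)). nra.
      replace eps with ((Rabs L + 1) * (eps / (Rabs L + 1))) by (field; lra).
      apply Rmult_lt_compat_l; lra. }
    lra. }
  destruct (continuity_ab_min psi (-2) 2 ltac:(lra) (fun c _ => Hcont c)) as [mx [Hmin Hmx]].
  exists (2 * phi (cl mx) - 1). split.
  - pose proof (Hphi (cl mx) (Hcl mx)). lra.
  - intros r Hr. specialize (Hmin r Hr). unfold psi in Hmin. rewrite (Hcl3 r Hr) in Hmin. lra.
Qed.


Lemma crt_path (Ed : nat -> nat -> Prop) i q : clos_refl_trans_1n nat Ed i q -> exists d, pathn Ed d i q.
Proof. induction 1. exists 0%nat; constructor. destruct IHclos_refl_trans_1n as [d Hd]. exists (S d). econstructor; eauto. Qed.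

Theorem corollary2
  (N : nat) (phi : R -> R) (c : R)
  (x : R -> nat -> R) (w : R -> nat -> nat -> R)
  (Hphi_range : forall r, -2 <= r <= 2 -> 0 <= phi r <= 1)
  (Hphi_lip : lipschitz_on_22 phi)
  (Hphi_even : forall r, -2 <= r <= 2 -> phi (- r) = phi r)
  (Hphi0 : phi 0 > 0)
  (Hc : c >= 1/2)
  (Hphi_c : forall r, -2 <= r <= 2 -> phi r > c)
  (Hx_range : forall t i, 0 <= t -> (i < N)%nat -> -1 <= x t i <= 1)
  (Hw_range : forall t i j, 0 <= t -> (i < N)%nat -> (j < N)%nat ->
      0 <= w t i j <= 1)
  (Hw_diag : forall t i, 0 <= t -> (i < N)%nat -> w t i i = 1)
  (Hx_sorted : forall i j, (i <= j)%nat -> (j < N)%nat -> x 0 i <= x 0 j)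
  (Hconn : strongly_connected N (w 0))
  (Hx_cont0 : forall i, (i < N)%nat ->
      filterlim (fun s => x s i) (at_right 0) (locally (x 0 i)))
  (Hw_cont0 : forall i j, (i < N)%nat -> (j < N)%nat ->
      filterlim (fun s => w s i j) (at_right 0) (locally (w 0 i j)))
  (Hx_ode : forall t i, 0 < t -> (i < N)%nat ->
      is_derive (fun s => x s i) t (opinion_rhs N phi (x t) (w t) i))
  (Hw_ode : forall t i j, 0 < t -> (i < N)%nat -> (j < N)%nat -> i <> j ->
      is_derive (fun s => w s i j) t (weight_rhs phi (x t) (w t) i j)) :
  (exists xstar : R, forall i, (i < N)%nat ->
      is_lim (fun t => x t i) p_infty xstar)
  /\ (forall i j, (i < N)%nat -> (j < N)%nat ->
      is_lim (fun t => w t i j) p_infty (ind_pos (w 0 i j))).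
Proof.
  assert (Hhalf : forall r, -2 <= r <= 2 -> 1/2 < phi r) by (intros r Hr; specialize (Hphi_c r Hr); lra).
  assert (Hdiff : forall t i j, 0 <= t -> (i < N)%nat -> (j < N)%nat -> -2 <= x t j - x t i <= 2).
  { intros t i j Ht Hi Hj. pose proof (Hx_range t i Ht Hi). pose proof (Hx_range t j Ht Hj). lra. }
  destruct (phi_min phi c Hphi_lip Hc Hphi_c) as [mp [Hmp Hmp2]].
  assert (Wmono : forall i j s t, (i < N)%nat -> (j < N)%nat -> 0 <= s <= t -> w s i j <= w t i j).
  { intros i j s t Hi Hj Hst. destruct (Nat.eq_dec i j) as [<-|Hne].
    - rewrite !Hw_diag by (auto; lra). lra.
    - assert (- w t i j <= - w s i j); [|lra].
      refine (nonincr (fun u => - w u i j) (fun u => - weight_rhs phi (x u) (w u) i j) 0 _ _ _ s t Hst).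
      + intros u Hu. eapply deriv_eq. apply (is_derive_opp (fun u => w u i j)). apply Hw_ode; auto. reflexivity.
      + intros u Hu. unfold weight_rhs. pose proof (Hw_range u i j ltac:(lra) Hi Hj).
        pose proof (Hhalf _ (Hdiff u i j ltac:(lra) Hi Hj)).
        assert (0 <= w u i j * (1 - w u i j)) by (apply Rmult_le_pos; lra).
        assert (0 <= w u i j * (1 - w u i j) * (2 * phi (x u j - x u i) - 1)) by (apply Rmult_le_pos; lra). lra.
      + apply (rc_bound (fun u => w u i j) (fun u => - w u i j) 0). apply Hw_cont0; auto.
        intros u. replace (- w u i j - - w 0 i j) with (- (w u i j - w 0 i j)) by ring. rewrite Rabs_Ropp. lra. }
  split.
  - destruct N as [|N'] eqn:HNeq.
    { exists 0. intros; lia. }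
    rewrite <- HNeq in *.
    assert (HN : (0 < N)%nat) by lia.
    set (deg := fun t i => degree N (w t) i).
    assert (Hdeg1 : forall t i, 0 <= t -> (i < N)%nat -> 1 <= deg t i).
    { intros t i Ht Hi. unfold deg, degree. rewrite sumN_L. rewrite <- (Hw_diag t i Ht Hi) at 1.
      apply (sumL_term _ (fun j => w t i j)). intros k Hk; apply in_seq0 in Hk. apply Hw_range; auto.
      apply in_seq0; auto. }
    assert (HdegN : forall t i, 0 <= t -> (i < N)%nat -> deg t i <= INR N).
    { intros t i Ht Hi. unfold deg, degree. rewrite sumN_L.
      apply Rle_trans with (sumL (seq 0 N) (fun _ => 1)). apply sumL_le. intros k Hk; apply in_seq0 in Hk. apply Hw_range; auto.
      rewrite sumL_const, length_seq. lra. }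
    set (a := fun t i k => w t i k * phi (x t k - x t i) / deg t i).
    assert (Hsys : forall t i, 0 < t -> (i < N)%nat -> is_derive (fun s => x s i) t (dx N x a t i)).
    { intros t i Ht Hi. eapply deriv_eq. apply Hx_ode; auto.
      unfold opinion_rhs, dx, a. fold (deg t i). rewrite !sumN_L.
      transitivity (/ deg t i * sumL (seq 0 N) (fun k => w t i k * phi (x t k - x t i) * (x t k - x t i))).
      - f_equal. apply sumL_ext. intros k _. destruct (Nat.eqb_spec k i) as [->|]; [ring|reflexivity].
      - rewrite <- sumL_scal. apply sumL_ext. intros k _. unfold Rdiv. ring. }
    assert (Ha : forall t i k, 0 < t -> (i < N)%nat -> (k < N)%nat -> 0 <= a t i k).
    { intros t i k Ht Hi Hk. unfold a. pose proof (Hdeg1 t i ltac:(lra) Hi).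
      pose proof (Hw_range t i k ltac:(lra) Hi Hk). pose proof (Hphi_range _ (Hdiff t i k ltac:(lra) Hi Hk)).
      apply Rdiv_le_0_compat; [|lra]. apply Rmult_le_pos; lra. }
    assert (Hsum : forall t i, 0 < t -> (i < N)%nat -> sumN N (a t i) <= 1).
    { intros t i Ht Hi. pose proof (Hdeg1 t i ltac:(lra) Hi). unfold a. rewrite sumN_L.
      transitivity (/ deg t i * sumL (seq 0 N) (fun k => w t i k * phi (x t k - x t i))).
      - rewrite <- sumL_scal. right. apply sumL_ext. intros; unfold Rdiv; ring.
      - replace 1 with (/ deg t i * deg t i) by (field; lra).
        apply Rmult_le_compat_l. left; apply Rinv_0_lt_compat; lra.
        unfold deg, degree. rewrite sumN_L. apply sumL_le. intros k Hk; apply in_seq0 in Hk.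
        pose proof (Hw_range t i k ltac:(lra) Hi Hk). pose proof (Hphi_range _ (Hdiff t i k ltac:(lra) Hi Hk)).
        nra. }
    set (Ed := pos_edge N (w 0)).
    destruct (fin_min N (fun i al => forall j, (j < N)%nat -> w 0 i j > 0 -> al <= w 0 i j / (2 * INR N))) as [al0 [Hal0 Hal0']].
    { intros i al al' Hal' H j Hj Hw. specialize (H j Hj Hw). lra. }
    { intros i Hi. apply (fin_min N (fun j al => w 0 i j > 0 -> al <= w 0 i j / (2 * INR N))).
      - intros j al al' Hal' H Hw. specialize (H Hw). lra.
      - intros j Hj. destruct (Rlt_dec 0 (w 0 i j)).
        + exists (w 0 i j / (2 * INR N)). split; [|lra]. apply Rdiv_lt_0_compat; auto.
          apply lt_0_INR in HN. lra.
        + exists 1. split; [lra|]. intros; lra. }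
    set (al := Rmin al0 1).
    assert (Hal : 0 < al <= 1) by (unfold al; split; [apply Rmin_pos; lra|apply Rmin_r]).
    assert (HE : forall t i j, 0 < t -> Ed i j -> (i < N)%nat /\ (j < N)%nat /\ al <= a t i j).
    { intros t i j Ht [Hi [Hj Hw]]. split; auto. split; auto.
      apply Rle_trans with al0. apply Rmin_l.
      apply Rle_trans with (w 0 i j / (2 * INR N)). apply Hal0'; auto.
      pose proof (Hdeg1 t i ltac:(lra) Hi). pose proof (HdegN t i ltac:(lra) Hi).
      pose proof (Wmono i j 0 t Hi Hj ltac:(lra)). pose proof (Hhalf _ (Hdiff t i j ltac:(lra) Hi Hj)).
      unfold a. unfold Rdiv.
      replace (w 0 i j * / (2 * INR N)) with ((w 0 i j * / 2) * / INR N) by (field; apply not_0_INR; lia).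
      apply Rmult_le_compat.
      - apply Rmult_le_pos; lra.
      - left; apply Rinv_0_lt_compat. apply lt_0_INR; auto.
      - nra.
      - apply Rinv_le_contravar; lra. }
    destruct (fin_bound N (fun i K => forall q, (q < N)%nat -> exists d, (d <= K)%nat /\ pathn Ed d i q)) as [K HK].
    { intros i K K' HKK H q Hq. destruct (H q Hq) as [d [Hd Hp]]. exists d. split; auto; lia. }
    { intros i Hi. apply (fin_bound N (fun q K => exists d, (d <= K)%nat /\ pathn Ed d i q)).
      - intros q K K' HKK [d [Hd Hp]]. exists d. split; auto; lia.
      - intros q Hq. destruct (crt_path Ed i q (clos_rt_rt1n _ _ _ _ (Hconn i q Hi Hq))) as [d Hd].
        exists d, d. auto. }
    apply (consensus N x a Hsys Ha Hsum Ed al HE Hal K (fun i q Hi Hq => HK i Hi q Hq) HN).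
    intros; apply Hx_range; auto.
  - intros i j Hi Hj. unfold ind_pos. destruct (Rlt_dec 0 (w 0 i j)) as [Hpos|Hz].
    + destruct (Nat.eq_dec i j) as [<-|Hne].
      { apply lim_of_eps. intros eps Heps. exists 0. intros t Ht. rewrite Hw_diag by (auto; lra).
        rewrite Rminus_diag, Rabs_R0; auto. }
      set (k := w 0 i j * mp).
      assert (Hk : 0 < k) by (unfold k; apply Rmult_lt_0_compat; auto).
      assert (HG : forall s t, 0 <= s <= t ->
         (1 - w t i j) * exp (k * (t - 0)) <= (1 - w s i j) * exp (k * (s - 0))).
      { apply (nonincr (fun t => (1 - w t i j) * exp (k * (t - 0)))
           (fun t => (- weight_rhs phi (x t) (w t) i j + k * (1 - w t i j)) * exp (k * (t - 0))) 0).
        - intros t Ht. apply (der_exp_mul (fun t => 1 - w t i j)).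
          eapply deriv_eq. apply (is_derive_plus (fun _ => 1) (fun s => - w s i j)). apply is_derive_const.
          apply (is_derive_opp (fun s => w s i j)). apply Hw_ode; auto. simpl. unfold plus, opp, zero; simpl. ring.
        - intros t Ht. unfold weight_rhs. pose proof (exp_pos (k * (t - 0))).
          pose proof (Hw_range t i j ltac:(lra) Hi Hj). pose proof (Wmono i j 0 t Hi Hj ltac:(lra)).
          pose proof (Hmp2 _ (Hdiff t i j ltac:(lra) Hi Hj)).
          assert (k <= w t i j * (2 * phi (x t j - x t i) - 1)).
          { unfold k. apply Rmult_le_compat; lra. }
          assert ((1 - w t i j) * (k - w t i j * (2 * phi (x t j - x t i) - 1)) <= 0).
          { apply Rmult_le_0_l; lra. }
          apply Rmult_le_0_r; [|lra]. nra.
        - apply (rc_mul (fun t => 1 - w t i j) (fun t => exp (k * (t - 0)))).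
          apply (rc_bound (fun u => w u i j) (fun u => 1 - w u i j) 0). apply Hw_cont0; auto.
          intros u. replace (1 - w u i j - (1 - w 0 i j)) with (- (w u i j - w 0 i j)) by ring. rewrite Rabs_Ropp. lra.
          apply rc_exp. }
      apply lim_of_eps. intros eps Heps. exists (1 / (k * eps)). intros t Ht.
      assert (Ht0 : 0 < t).
      { apply Rlt_trans with (1 / (k * eps)); auto. apply Rdiv_lt_0_compat. lra. apply Rmult_lt_0_compat; lra. }
      specialize (HG 0 t ltac:(lra)).
      replace (k * (0 - 0)) with 0 in HG by ring. rewrite exp_0 in HG.
      pose proof (exp_ineq1_le (k * (t - 0))).
      pose proof (Hw_range t i j ltac:(lra) Hi Hj). pose proof (Hw_range 0 i j ltac:(lra) Hi Hj).
      assert (Hkt : 1 < k * t * eps).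
      { assert (1 / (k * eps) * (k * eps) < t * (k * eps)).
        { apply Rmult_lt_compat_r; auto. apply Rmult_lt_0_compat; lra. }
        replace (1 / (k * eps) * (k * eps)) with 1 in H2 by (field; lra). lra. }
      assert (Hb : (1 - w t i j) * (1 + k * (t - 0)) <= 1).
      { apply Rle_trans with ((1 - w t i j) * exp (k * (t - 0))). apply Rmult_le_compat_l; lra. lra. }
      rewrite Rabs_left1 by lra.
      destruct (Rlt_dec (1 - w t i j) eps) as [|Hge]; [lra|].
      apply Rnot_lt_le in Hge. exfalso. nra.
    + assert (Hw0 : w 0 i j = 0) by (pose proof (Hw_range 0 i j ltac:(lra) Hi Hj); lra).
      destruct (Nat.eq_dec i j) as [<-|Hne].
      { rewrite Hw_diag in Hw0 by (auto; lra). lra. }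
      assert (HG : forall s t, 0 <= s <= t ->
         w t i j * exp (-1 * (t - 0)) <= w s i j * exp (-1 * (s - 0))).
      { apply (nonincr (fun t => w t i j * exp (-1 * (t - 0)))
           (fun t => (weight_rhs phi (x t) (w t) i j + -1 * w t i j) * exp (-1 * (t - 0))) 0).
        - intros t Ht. apply (der_exp_mul (fun t => w t i j)). apply Hw_ode; auto.
        - intros t Ht. unfold weight_rhs. pose proof (exp_pos (-1 * (t - 0))).
          pose proof (Hw_range t i j ltac:(lra) Hi Hj).
          pose proof (Hphi_range _ (Hdiff t i j ltac:(lra) Hi Hj)).
          pose proof (Hhalf _ (Hdiff t i j ltac:(lra) Hi Hj)).
          assert ((1 - w t i j) * (2 * phi (x t j - x t i) - 1) <= 1) by nra.
          assert (w t i j * ((1 - w t i j) * (2 * phi (x t j - x t i) - 1)) <= w t i j * 1) by (apply Rmult_le_compat_l; lra).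
          apply Rmult_le_0_r; [|lra]. nra.
        - apply (rc_mul (fun t => w t i j) (fun t => exp (-1 * (t - 0)))). apply Hw_cont0; auto. apply rc_exp. }
      apply lim_of_eps. intros eps Heps. exists 0. intros t Ht.
      specialize (HG 0 t ltac:(lra)). rewrite Hw0, Rmult_0_l in HG.
      pose proof (exp_pos (-1 * (t - 0))). pose proof (Hw_range t i j ltac:(lra) Hi Hj).
      assert (w t i j <= 0).
      { destruct (Rle_dec (w t i j) 0); auto. exfalso. assert (0 < w t i j * exp (-1 * (t - 0))) by (apply Rmult_lt_0_compat; lra). lra. }
      replace (w t i j - 0) with 0 by lra. rewrite Rabs_R0; auto.
Qed.
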